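(* Let $\ell$ be a prime, $E$ a finite extension of $\mathbb{Q}_\ell$, and let $\mathrm{Cts}(\widehat{\mathbb{Z}}^n,E)$ be the ring of continuous maps $\widehat{\mathbb{Z}}^n\to E$ with the compact-open topology. Let $G$ be a profinite group and $\rho\colon G\to\mathrm{GL}_m(\mathrm{Cts}(\widehat{\mathbb{Z}}^n,E))$ a continuous homomorphism. For $x\in\widehat{\mathbb{Z}}^n$ let $\rho_x\colon G\to\mathrm{GL}_m(E)$ be the composition of $\rho$ with evaluation at $x$. Suppose that for each standard generator of $\widehat{\mathbb{Z}}^n$ there exists an isomorphism of $\rho$ with its pullback along translation by that generator on $\widehat{\mathbb{Z}}^n$. Then the representations $\rho_x$ are pairwise isomorphic for all $x\in\widehat{\mathbb{Z}}^n$; moreover, there exists $h\in\mathrm{GL}_m(\mathrm{Cts}(\widehat{\mathbb{Z}}^n,E))$ such that $\rho$ takes values in $h^{-1}\mathrm{GL}_m(E)h$.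
   Context: The pullback of $\rho$ along a translation $t\colon\widehat{\mathbb{Z}}^n\to\widehat{\mathbb{Z}}^n$ is the composition of $\rho$ with the ring automorphism $f\mapsto f\circ t$ of $\mathrm{Cts}(\widehat{\mathbb{Z}}^n,E)$ applied entrywise; an isomorphism is a matrix in $\mathrm{GL}_m(\mathrm{Cts}(\widehat{\mathbb{Z}}^n,E))$ intertwining the two representations. $\mathrm{GL}_m(E)$ is viewed inside $\mathrm{GL}_m(\mathrm{Cts}(\widehat{\mathbb{Z}}^n,E))$ as constant functions. *)

(* Defs.v *)
From HB Require Import structures.
From mathcomp Require Import all_boot all_order all_algebra.
From mathcomp Require Import all_classical all_reals all_analysis.
Set Implicit Arguments. Unset Strict Implicit. Unset Printing Implicit Defensive.
Import Order.TTheory GRing.Theory Num.Theory.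

(* The profinite integers Zhat = lim_k Z/kZ, realised as compatible         *)
(* families of residues: a m is the residue modulo m.+1.                    *)
Definition zhat_cond (a : nat -> nat) : Prop :=
  forall m m' : nat, (m.+1 %| m'.+1)%N -> (a m' %% m.+1)%N = a m.

Record Zhat := ZHat { zval : nat -> nat; zvalP : zhat_cond zval }.

Lemma zsucc_cond (a : Zhat) : zhat_cond (fun m => ((zval a m).+1 %% m.+1)%N).
Proof.
move=> m m' dv /=.
by rewrite modn_dvdm // -[(zval a m').+1]addn1 -modnDml (zvalP a dv) addn1.
Qed.

Definition zsucc (a : Zhat) : Zhat := ZHat (zsucc_cond a).

Definition Zhatn (n : nat) := 'I_n -> Zhat.

Definition ztrans (n : nat) (i : 'I_n) (x : Zhatn n) : Zhatn n :=
  fun j => if j == i then zsucc (x j) else x j.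

(* the profinite (product) topology on Zhat^n: basic neighbourhoods of x are
   the sets of y agreeing with x modulo 1, 2, ..., N+1 in every coordinate *)
Definition zclose (n N : nat) (x y : Zhatn n) : Prop :=
  forall (i : 'I_n) (m : nat), (m <= N)%N -> zval (y i) m = zval (x i) m.

Section LocalField.
Local Open Scope ring_scope.
Variables (R : realType) (E : fieldType) (nrm : E -> R).

(* E is a finite extension of Q_l, with its l-adic topology:
   nrm is a complete non-archimedean absolute value on the characteristic-0
   field E with |l| < 1 (so its restriction to Q is l-adic, and the closure
   of Q in E is Q_l), and E is finite-dimensional over that copy of Q_l. *)
Definition in_Ql (y : E) : Prop :=
  forall eps : R, 0 < eps -> exists q : rat, nrm (y - ratr q) < eps.

Record ell_adic_field (l : nat) : Prop := {
  nrm_eq0 : forall x, nrm x = 0 <-> x = 0;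
  nrm_mul : forall x y, nrm (x * y) = nrm x * nrm y;
  nrm_ultra : forall x y, nrm (x + y) <= Num.max (nrm x) (nrm y);
  char0 : forall k : nat, (k%:R : E) = 0 -> k = 0%N;
  nrm_l : nrm (l%:R) < 1;
  complete : forall u : nat -> E,
    (forall eps : R, 0 < eps -> exists N, forall p q, (N <= p)%N -> (N <= q)%N ->
        nrm (u p - u q) < eps) ->
    exists y, forall eps : R, 0 < eps -> exists N, forall p, (N <= p)%N ->
        nrm (u p - y) < eps;
  finite_over_Ql : exists (d : nat) (b : 'I_d -> E), forall y : E,
    exists c : 'I_d -> E, (forall k, in_Ql (c k)) /\ y = \sum_(k < d) c k * b k
}.

Definition cts_fun (n : nat) (f : Zhatn n -> E) : Prop :=
  forall (x : Zhatn n) (eps : R), 0 < eps ->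
    exists N, forall y, zclose N x y -> nrm (f y - f x) < eps.

(* matrices over Cts(Zhat^n, E), represented pointwise *)
Definition cts_mx (n m : nat) (P : Zhatn n -> 'M[E]_m) : Prop :=
  forall i j : 'I_m, cts_fun (fun x => P x i j).

Definition GLCts (n m : nat) (P : Zhatn n -> 'M[E]_m) : Prop :=
  cts_mx P /\ exists Q : Zhatn n -> 'M[E]_m, cts_mx Q /\
    forall x, P x *m Q x = 1%:M /\ Q x *m P x = 1%:M.

(* continuity of g |-> rho g into GL_m(Cts(Zhat^n,E)), where Cts carries the
   compact-open topology, i.e. (Zhat^n compact, E metric) the topology of
   uniform convergence, and matrices carry the product topology *)
Definition cts_rep (G : topologicalType) (n m : nat)
  (rho : G -> Zhatn n -> 'M[E]_m) : Prop :=
  forall (g : G) (eps : R), 0 < eps ->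
    exists U : set G, open U /\ U g /\
      forall g', U g' -> forall x i j, nrm (rho g' x i j - rho g x i j) < eps.

End LocalField.

Record profinite_group (G : topologicalType) (mul : G -> G -> G) (inv : G -> G)
    (one : G) : Prop := {
  pg_assoc : forall a b c, mul a (mul b c) = mul (mul a b) c;
  pg_mul1 : forall a, mul one a = a;
  pg_mulV : forall a, mul (inv a) a = one;
  pg_cts : continuous (fun p : G * G => mul p.1 (inv p.2));
  pg_compact : compact [set: G];
  pg_hausdorff : hausdorff_space G;
  pg_tdisc : totally_disconnected [set: G]
}.

(* Main.v *)
Require Import Defs.
From HB Require Import structures.
From mathcomp Require Import all_boot all_order all_algebra.
From mathcomp Require Import all_classical all_reals all_analysis.
From mathcomp Require Import ring lra.
Import Order.TTheory GRing.Theory Num.Theory.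
Set Implicit Arguments. Unset Strict Implicit. Unset Printing Implicit Defensive.
Local Open Scope ring_scope.

Record nax (R : realType) (E : fieldType) (nrm : E -> R) : Prop := {
  ax0 : forall x, nrm x = 0 <-> x = 0;
  axM : forall x y, nrm (x * y) = nrm x * nrm y;
  axU : forall x y, nrm (x + y) <= Num.max (nrm x) (nrm y);
  axN1 : nrm (-1) = 1 }.

Lemma nrm1_gen (R : realType) (E : fieldType) (nrm : E -> R)
  (h0 : forall x, nrm x = 0 <-> x = 0)
  (hM : forall x y, nrm (x * y) = nrm x * nrm y) : nrm 1 = 1.
Proof.
have h := hM 1 1; rewrite mulr1 in h.
have n0 : nrm 1 != 0 by apply/eqP => /h0 /eqP; rewrite oner_eq0.
by apply: (mulIf n0); rewrite mul1r -h.
Qed.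

Lemma nax_of (R : realType) (E : fieldType) (nrm : E -> R) (l : nat)
  (hl : prime l) (hE : ell_adic_field nrm l) : nax nrm.
Proof.
have h0 := nrm_eq0 hE; have hM := nrm_mul hE; have hU := nrm_ultra hE.
have n1 := nrm1_gen h0 hM.
split => //.
have sq : nrm (-1) * nrm (-1) = 1 by rewrite -hM mulrNN mulr1.
have : (nrm (-1) - 1) * (nrm (-1) + 1) = 0 by rewrite mulrDr !mulrBl sq; ring.
move/eqP; rewrite mulf_eq0 => /orP[]; first by rewrite subr_eq0 => /eqP.
rewrite addr_eq0 => /eqP hm.
have nN x : nrm (- x) = - nrm x by rewrite -mulN1r hM hm mulN1r.
have pos_add a b : 0 < nrm a -> 0 < nrm b -> 0 < nrm (a + b).
  move=> pa pb.
  have := hU (a + b) (- b); rewrite addrK nN => H.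
  have : nrm a <= Num.max (nrm (a + b)) (- nrm b) by [].
  rewrite le_max => /orP[]; first by apply: lt_le_trans.
  move=> hab; exfalso.
  have : nrm a <= - nrm b by [].
  move: pa pb; clear; move=> pa pb hh. have := lt_le_trans pa hh. 
  by rewrite oppr_gt0 ltNge (ltW pb).
have posn k : 0 < nrm (k.+1%:R : E).
  elim: k => [|k IH]; first by rewrite n1 ltr01.
  by rewrite -addn1 natrD; apply: pos_add => //; rewrite n1 ltr01.
have l2 : (2 <= l)%N by apply: prime_gt1.
have := hU (l%:R) (1 - l%:R); rewrite addrC subrK n1.
have : l%:R - 1 = ((l.-2).+1)%:R :> E.
  have -> : l = (l.-2).+2 by rewrite -subn2 -addn2 subnK.
  by rewrite /= [in _.+2%:R]mulrSr addrK.
move=> e; rewrite -opprB e nN => H.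
have := posn l.-2; have := nrm_l hE.
move: H; set a := nrm _; set b := nrm _ => H hb ha.
suff : (1 : R) < 1 by rewrite ltxx.
rewrite le_max in H.
case/orP: H => H1. by apply: le_lt_trans H1 hb.
by apply: (le_lt_trans H1); rewrite (lt_trans _ ltr01) // oppr_lt0.
Qed.

Lemma nrm0 (R : realType) (E : fieldType) (nrm : E -> R) (hN : nax nrm) : nrm 0 = 0.
Proof. by apply/(ax0 hN). Qed.
Lemma nrm1 (R : realType) (E : fieldType) (nrm : E -> R) (hN : nax nrm) : nrm 1 = 1.
Proof. exact: nrm1_gen (ax0 hN) (axM hN). Qed.
Lemma nrmN (R : realType) (E : fieldType) (nrm : E -> R) (hN : nax nrm) x :
  nrm (- x) = nrm x.
Proof. by rewrite -mulN1r (axM hN) (axN1 hN) mul1r. Qed.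
Lemma nrm_ge0 (R : realType) (E : fieldType) (nrm : E -> R) (hN : nax nrm) x :
  0 <= nrm x.
Proof. by have := axU hN x (- x); rewrite subrr nrm0 // nrmN // maxxx. Qed.
Lemma nrm_gt0 (R : realType) (E : fieldType) (nrm : E -> R) (hN : nax nrm) x :
  x != 0 -> 0 < nrm x.
Proof.
move=> xn0; rewrite lt_neqAle nrm_ge0 // andbT eq_sym; apply/eqP => /(ax0 hN).
by move/eqP: xn0.
Qed.
Lemma nrm_neq0 (R : realType) (E : fieldType) (nrm : E -> R) (hN : nax nrm) x :
  nrm x != 0 -> x != 0.
Proof. by apply: contra => /eqP ->; rewrite nrm0. Qed.
Lemma nrmBC (R : realType) (E : fieldType) (nrm : E -> R) (hN : nax nrm) x y :
  nrm (x - y) = nrm (y - x).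
Proof. by rewrite -nrmN // opprB. Qed.
Lemma nrmD_le (R : realType) (E : fieldType) (nrm : E -> R) (hN : nax nrm) x y c :
  nrm x <= c -> nrm y <= c -> nrm (x + y) <= c.
Proof. by move=> hx hy; apply: le_trans (axU hN x y) _; rewrite ge_max hx hy. Qed.
Lemma nrmD_lt (R : realType) (E : fieldType) (nrm : E -> R) (hN : nax nrm) x y c :
  nrm x < c -> nrm y < c -> nrm (x + y) < c.
Proof. by move=> hx hy; apply: le_lt_trans (axU hN x y) _; rewrite gt_max hx hy. Qed.
Lemma nrm_iso (R : realType) (E : fieldType) (nrm : E -> R) (hN : nax nrm) a b :
  nrm b < nrm a -> nrm (a + b) = nrm a.
Proof.
move=> hba; apply/eqP; rewrite eq_le; apply/andP; split.
  by apply: nrmD_le => //; apply: ltW.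
have := axU hN (a + b) (- b); rewrite addrK nrmN // le_max => /orP[] // h.
by exfalso; move: (le_lt_trans h hba); rewrite ltxx.
Qed.
Lemma nrmV (R : realType) (E : fieldType) (nrm : E -> R) (hN : nax nrm) x :
  nrm (x^-1) = (nrm x)^-1.
Proof.
have [->|xn0] := eqVneq x 0; first by rewrite invr0 nrm0 // invr0.
have := axM hN x x^-1; rewrite mulfV // nrm1 // => h.
have hx : nrm x != 0 by rewrite gt_eqF // nrm_gt0.
by apply: (mulfI hx); rewrite -h mulfV.
Qed.

Definition ctsAt (R : realType) (E : fieldType) (nrm : E -> R) (n : nat)
  (f : Zhatn n -> E) (x : Zhatn n) : Prop :=
  forall eps : R, 0 < eps -> exists N, forall y, zclose N x y -> nrm (f y - f x) < eps.

Lemma zclose_mono n N N' (x y : Zhatn n) : (N <= N')%N -> zclose N' x y -> zclose N x y.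
Proof. by move=> le h i m hm; apply: h; apply: leq_trans le. Qed.

Lemma zclose_refl n N (x : Zhatn n) : zclose N x x.
Proof. by []. Qed.

Lemma cts_const (R : realType) (E : fieldType) (nrm : E -> R) (hN : nax nrm) n (c : E) x :
  ctsAt nrm (fun _ : Zhatn n => c) x.
Proof. by move=> eps he; exists 0%N => y _; rewrite subrr nrm0. Qed.

Lemma cts_add (R : realType) (E : fieldType) (nrm : E -> R) (hN : nax nrm) n
  (f g : Zhatn n -> E) x :
  ctsAt nrm f x -> ctsAt nrm g x -> ctsAt nrm (fun y => f y + g y) x.
Proof.
move=> cf cg eps he; have [N1 h1] := cf eps he; have [N2 h2] := cg eps he.
exists (maxn N1 N2) => y hy.
have -> : f y + g y - (f x + g x) = (f y - f x) + (g y - g x) by ring.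
apply: nrmD_lt => //; [apply: h1 | apply: h2]; apply: zclose_mono hy;
  by rewrite ?leq_maxl ?leq_maxr.
Qed.

Lemma cts_opp (R : realType) (E : fieldType) (nrm : E -> R) (hN : nax nrm) n
  (f : Zhatn n -> E) x : ctsAt nrm f x -> ctsAt nrm (fun y => - f y) x.
Proof.
move=> cf eps he; have [N1 h1] := cf eps he; exists N1 => y hy.
by rewrite -opprD nrmN //; apply: h1.
Qed.

Lemma cts_mul (R : realType) (E : fieldType) (nrm : E -> R) (hN : nax nrm) n
  (f g : Zhatn n -> E) x :
  ctsAt nrm f x -> ctsAt nrm g x -> ctsAt nrm (fun y => f y * g y) x.
Proof.
move=> cf cg eps he.
set a := nrm (f x); set b := nrm (g x).
have a0 : 0 <= a by apply: nrm_ge0.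
have b0 : 0 <= b by apply: nrm_ge0.
have e1 : 0 < Num.min 1 (eps / (b + 1)).
  by rewrite lt_min ltr01 /= divr_gt0 // ltr_wpDl.
have e2 : 0 < eps / (a + 1) by rewrite divr_gt0 // ltr_wpDl.
have [N1 h1] := cf _ e1; have [N2 h2] := cg _ e2.
exists (maxn N1 N2) => y hy.
have hf := h1 y (zclose_mono (leq_maxl _ _) hy).
have hg := h2 y (zclose_mono (leq_maxr _ _) hy).
have -> : f y * g y - f x * g x = f y * (g y - g x) + (f y - f x) * g x by ring.
move: hf; rewrite lt_min => /andP[hf1 hf2].
have hfy : nrm (f y) <= a + 1.
  have -> : f y = f x + (f y - f x) by ring.
  apply: nrmD_le => //; first by rewrite lerDl.
  by rewrite (le_trans (ltW hf1)) // lerDr.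
apply: nrmD_lt => //; rewrite (axM hN).
  have g0 : 0 <= nrm (g y - g x) by apply: nrm_ge0.
  apply: (le_lt_trans (ler_wpM2r g0 hfy)).
  by rewrite -ltr_pdivlMl ?ltr_wpDl // mulrC.
have f0 : 0 <= nrm (f y - f x) by apply: nrm_ge0.
have : nrm (f y - f x) * b <= eps / (b + 1) * b by apply: ler_wpM2r => //; apply: ltW.
move/le_lt_trans; apply.
rewrite mulrAC ltr_pdivrMr ?ltr_wpDl // ltr_pM2l // ltrDl ltr01 //.
Qed.

Lemma cts_inv (R : realType) (E : fieldType) (nrm : E -> R) (hN : nax nrm) n
  (f : Zhatn n -> E) x :
  ctsAt nrm f x -> f x != 0 -> ctsAt nrm (fun y => (f y)^-1) x.
Proof.
move=> cf fx0 eps he.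
set a := nrm (f x).
have a0 : 0 < a by apply: nrm_gt0.
have e1 : 0 < Num.min a (eps * (a * a)) by rewrite lt_min a0 /= mulr_gt0 // mulr_gt0.
have [N h] := cf _ e1; exists N => y hy.
move: (h y hy); rewrite lt_min => /andP[h1 h2].
have fya : nrm (f y) = a.
  have -> : f y = f x + (f y - f x) by ring.
  by rewrite nrm_iso.
have fy0 : f y != 0 by apply: (nrm_neq0 hN); rewrite fya gt_eqF.
have -> : (f y)^-1 - (f x)^-1 = (f x - f y) * ((f y)^-1 * (f x)^-1).
  by field; apply/andP.
rewrite !(axM hN) !(nrmV hN) fya (nrmBC hN).
by rewrite -/a -invfM ltr_pdivrMr ?mulr_gt0.
Qed.

Lemma cts_local (R : realType) (E : fieldType) (nrm : E -> R) n
  (f g : Zhatn n -> E) x N :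
  (forall y, zclose N x y -> f y = g y) -> ctsAt nrm g x -> ctsAt nrm f x.
Proof.
move=> e cg eps he; have [N1 h1] := cg eps he; exists (maxn N N1) => y hy.
rewrite !e //; first by apply: h1; apply: zclose_mono hy; rewrite leq_maxr.
by apply: zclose_mono hy; rewrite leq_maxl.
Qed.

Lemma cts_sum (R : realType) (E : fieldType) (nrm : E -> R) (hN : nax nrm) n
  (I : Type) (r : seq I) (P : pred I) (F : I -> Zhatn n -> E) x :
  (forall i, P i -> ctsAt nrm (F i) x) ->
  ctsAt nrm (fun y => \sum_(i <- r | P i) F i y) x.
Proof.
move=> h; elim: r => [|i r IH].
  by apply: (cts_local (g := fun _ => 0) (N := 0%N)) => [y _|]; rewrite ?big_nil //; apply: cts_const.
apply: (cts_local (g := fun y => (if P i then F i y else 0) + \sum_(j <- r | P j) F j y) (N := 0%N)).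
  by move=> y _; rewrite big_cons; case: (P i) => //; rewrite add0r.
apply: cts_add => //; case Pi: (P i); [exact: h | exact: cts_const].
Qed.

Lemma cts_prod (R : realType) (E : fieldType) (nrm : E -> R) (hN : nax nrm) n
  (I : Type) (r : seq I) (P : pred I) (F : I -> Zhatn n -> E) x :
  (forall i, P i -> ctsAt nrm (F i) x) ->
  ctsAt nrm (fun y => \prod_(i <- r | P i) F i y) x.
Proof.
move=> h; elim: r => [|i r IH].
  by apply: (cts_local (g := fun _ => 1) (N := 0%N)) => [y _|]; rewrite ?big_nil //; apply: cts_const.
apply: (cts_local (g := fun y => (if P i then F i y else 1) * \prod_(j <- r | P j) F j y) (N := 0%N)).
  by move=> y _; rewrite big_cons; case: (P i) => //; rewrite mul1r.
apply: cts_mul => //; case Pi: (P i); [exact: h | exact: cts_const].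
Qed.

Lemma cts_comp (R : realType) (E : fieldType) (nrm : E -> R) n
  (f : Zhatn n -> E) (g : Zhatn n -> Zhatn n) x :
  (forall N, exists N', forall y, zclose N' x y -> zclose N (g x) (g y)) ->
  ctsAt nrm f (g x) -> ctsAt nrm (fun y => f (g y)) x.
Proof.
move=> hg cf eps he; have [N h] := cf eps he; have [N' h'] := hg N.
by exists N' => y hy; apply: h; apply: h'.
Qed.

Definition mctsAt (R : realType) (E : fieldType) (nrm : E -> R) (n p q : nat)
  (M : Zhatn n -> 'M[E]_(p, q)) (x : Zhatn n) : Prop :=
  forall i j, ctsAt nrm (fun y => M y i j) x.

Lemma mcts_local (R : realType) (E : fieldType) (nrm : E -> R) n p q
  (M M' : Zhatn n -> 'M[E]_(p, q)) x N :
  (forall y, zclose N x y -> M y = M' y) -> mctsAt nrm M' x -> mctsAt nrm M x.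
Proof. by move=> e c i j; apply: (cts_local (N := N)) (c i j) => y /e ->. Qed.

Lemma mcts_const (R : realType) (E : fieldType) (nrm : E -> R) (hN : nax nrm) n p q
  (C : 'M[E]_(p, q)) x : mctsAt nrm (fun _ : Zhatn n => C) x.
Proof. by move=> i j; apply: cts_const. Qed.

Lemma mcts_add (R : realType) (E : fieldType) (nrm : E -> R) (hN : nax nrm) n p q
  (A B : Zhatn n -> 'M[E]_(p, q)) x :
  mctsAt nrm A x -> mctsAt nrm B x -> mctsAt nrm (fun y => A y + B y) x.
Proof.
move=> cA cB i j; apply: (cts_local (N := 0%N) (g := fun y => A y i j + B y i j)).
  by move=> y _; rewrite mxE.
exact: cts_add.
Qed.

Lemma mcts_opp (R : realType) (E : fieldType) (nrm : E -> R) (hN : nax nrm) n p q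
  (A : Zhatn n -> 'M[E]_(p, q)) x :
  mctsAt nrm A x -> mctsAt nrm (fun y => - A y) x.
Proof.
move=> cA i j; apply: (cts_local (N := 0%N) (g := fun y => - A y i j)).
  by move=> y _; rewrite mxE.
exact: cts_opp.
Qed.

Lemma mcts_scale (R : realType) (E : fieldType) (nrm : E -> R) (hN : nax nrm) n p q
  (c : Zhatn n -> E) (A : Zhatn n -> 'M[E]_(p, q)) x :
  ctsAt nrm c x -> mctsAt nrm A x -> mctsAt nrm (fun y => c y *: A y) x.
Proof.
move=> cc cA i j; apply: (cts_local (N := 0%N) (g := fun y => c y * A y i j)).
  by move=> y _; rewrite mxE.
exact: cts_mul.
Qed.

Lemma mcts_mul (R : realType) (E : fieldType) (nrm : E -> R) (hN : nax nrm) n p q r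
  (A : Zhatn n -> 'M[E]_(p, q)) (B : Zhatn n -> 'M[E]_(q, r)) x :
  mctsAt nrm A x -> mctsAt nrm B x -> mctsAt nrm (fun y => A y *m B y) x.
Proof.
move=> cA cB i j.
apply: (cts_local (N := 0%N) (g := fun y => \sum_(k <- index_enum 'I_q | true) A y i k * B y k j)).
  by move=> y _; rewrite mxE.
by apply: cts_sum => // k _; apply: cts_mul.
Qed.

Lemma mcts_sum (R : realType) (E : fieldType) (nrm : E -> R) (hN : nax nrm) n p q
  (I : Type) (s : seq I) (F : I -> Zhatn n -> 'M[E]_(p, q)) x :
  (forall i, mctsAt nrm (F i) x) -> mctsAt nrm (fun y => \sum_(i <- s) F i y) x.
Proof.
move=> cF a b.
apply: (cts_local (N := 0%N) (g := fun y => \sum_(i <- s | true) F i y a b)).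
  by move=> y _; rewrite summxE.
by apply: cts_sum => // i _; apply: cF.
Qed.

Lemma mcts_sub (R : realType) (E : fieldType) (nrm : E -> R) n p q p' q'
  (f : 'I_p' -> 'I_p) (g : 'I_q' -> 'I_q) (A : Zhatn n -> 'M[E]_(p, q)) x :
  mctsAt nrm A x -> mctsAt nrm (fun y => mxsub f g (A y)) x.
Proof.
move=> cA i j; apply: (cts_local (N := 0%N) (g := fun y => A y (f i) (g j))).
  by move=> y _; rewrite mxE.
exact: cA.
Qed.

Lemma mcts_tr (R : realType) (E : fieldType) (nrm : E -> R) n p q
  (A : Zhatn n -> 'M[E]_(p, q)) x :
  mctsAt nrm A x -> mctsAt nrm (fun y => (A y)^T) x.
Proof.
move=> cA i j; apply: (cts_local (N := 0%N) (g := fun y => A y j i)).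
  by move=> y _; rewrite mxE.
exact: cA.
Qed.

Lemma mcts_det (R : realType) (E : fieldType) (nrm : E -> R) (hN : nax nrm) n p
  (A : Zhatn n -> 'M[E]_p) x :
  mctsAt nrm A x -> ctsAt nrm (fun y => \det (A y)) x.
Proof.
move=> cA; rewrite /determinant.
apply: cts_sum => // s _; apply: cts_mul => //; first exact: cts_const.
by apply: cts_prod => // i _; apply: cA.
Qed.

Lemma mcts_adj (R : realType) (E : fieldType) (nrm : E -> R) (hN : nax nrm) n p
  (A : Zhatn n -> 'M[E]_p) x :
  mctsAt nrm A x -> mctsAt nrm (fun y => \adj (A y)) x.
Proof.
move=> cA i j.
apply: (cts_local (N := 0%N) (g := fun y => (-1) ^+ (j + i) * \det (row' j (col' i (A y))))).
  by move=> y _; rewrite mxE.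
apply: cts_mul => //; first exact: cts_const.
apply: mcts_det => // a b.
apply: (cts_local (N := 0%N) (g := fun y => A y (lift j a) (lift i b))).
  by move=> y _; rewrite !mxE.
exact: cA.
Qed.

Lemma cts_nonzero_near (R : realType) (E : fieldType) (nrm : E -> R) (hN : nax nrm) n
  (f : Zhatn n -> E) x :
  ctsAt nrm f x -> f x != 0 -> exists N, forall y, zclose N x y -> f y != 0.
Proof.
move=> cf fx0; have [N h] := cf _ (nrm_gt0 hN fx0); exists N => y /h.
apply: contraTneq => ->; rewrite sub0r nrmN // ltxx //.
Qed.

Lemma mcts_inv (R : realType) (E : fieldType) (nrm : E -> R) (hN : nax nrm) n p
  (A : Zhatn n -> 'M[E]_p) x :
  mctsAt nrm A x -> A x \in unitmx -> mctsAt nrm (fun y => invmx (A y)) x.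
Proof.
move=> cA uA.
have cd := mcts_det hN cA.
have [N hN'] : exists N, forall y, zclose N x y -> \det (A y) != 0.
  by apply: (cts_nonzero_near hN cd); rewrite -unitfE -unitmxE.
apply: (mcts_local (N := N) (M' := fun y => (\det (A y))^-1 *: \adj (A y))).
  by move=> y /hN' h; rewrite /invmx unitmxE unitfE h.
apply: mcts_scale => //; last exact: mcts_adj.
by apply: cts_inv => //; rewrite -unitfE -unitmxE.
Qed.

Lemma mcts_mxvec (R : realType) (E : fieldType) (nrm : E -> R) n p q
  (A : Zhatn n -> 'M[E]_(p, q)) x :
  mctsAt nrm A x -> mctsAt nrm (fun y => mxvec (A y)) x.
Proof.
move=> cA i j; rewrite [i]ord1; case/mxvec_indexP: j => a b.
apply: (cts_local (N := 0%N) (g := fun y => A y a b)).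
  by move=> y _; rewrite mxvecE.
exact: cA.
Qed.

Lemma mcts_vec_mx (R : realType) (E : fieldType) (nrm : E -> R) n p q
  (v : Zhatn n -> 'rV[E]_(p * q)) x :
  mctsAt nrm v x -> mctsAt nrm (fun y => vec_mx (v y)) x.
Proof.
move=> cv i j; apply: (cts_local (N := 0%N) (g := fun y => v y 0 (mxvec_index i j))).
  by move=> y _; rewrite mxE.
exact: cv.
Qed.

Lemma mcts_lin_mulmx (R : realType) (E : fieldType) (nrm : E -> R) (hN : nax nrm) n p
  (C : Zhatn n -> 'M[E]_p) x :
  mctsAt nrm C x -> mctsAt nrm (fun y => lin_mulmx (p := p) (C y)) x.
Proof.
move=> cC i j.
apply: (cts_local (N := 0%N) (g := fun y => mxvec (C y *m vec_mx (delta_mx 0 i)) 0 j)).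
  by move=> y _; rewrite /lin_mulmx /lin_mx mxE.
apply: mcts_mxvec; apply: mcts_mul => //; exact: mcts_const.
Qed.

Lemma zval_lt (a : Zhat) m : (zval a m < m.+1)%N.
Proof. by rewrite -(zvalP a (dvdnn m.+1)) ltn_mod. Qed.

Lemma zero_cond : zhat_cond (fun _ => 0%N).
Proof. by move=> m m' _; rewrite mod0n. Qed.
Definition zzero : Zhat := ZHat zero_cond.
Definition z0 (n : nat) : Zhatn n := fun _ => zzero.

Fixpoint trs (n : nat) (s : seq 'I_n) (y : Zhatn n) : Zhatn n :=
  match s with [::] => y | i :: s' => trs s' (ztrans i y) end.

Lemma zval_trs n (s : seq 'I_n) y j m :
  zval (trs s y j) m = ((zval (y j) m + count_mem j s) %% m.+1)%N.
Proof.
elim: s y => [|i s IH] y /=; first by rewrite addn0 modn_small // zval_lt.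
rewrite IH /ztrans; case: eqP => [->|ne] /=.
  by rewrite eqxx modnDml addSnnS add1n.
by rewrite (_ : (i == j) = false) //; apply/eqP => e; apply: ne.
Qed.

Lemma zclose_trs n N (s : seq 'I_n) x y : zclose N x y -> zclose N (trs s x) (trs s y).
Proof. by move=> h i m hm; rewrite !zval_trs h. Qed.

Lemma cts_trs (R : realType) (E : fieldType) (nrm : E -> R) n (s : seq 'I_n)
  (f : Zhatn n -> E) x :
  ctsAt nrm f (trs s x) -> ctsAt nrm (fun y => f (trs s y)) x.
Proof. by apply: cts_comp => N; exists N => y; apply: zclose_trs. Qed.

Lemma zclose_cyl n N (x y : Zhatn n) :
  (forall i, zval (y i) (N.+1`!).-1 = zval (x i) (N.+1`!).-1) -> zclose N x y.
Proof.
move=> h i m hm.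
have d : (m.+1 %| ((N.+1)`!).-1.+1)%N.
  by rewrite prednK ?fact_gt0 // dvdn_fact.
by rewrite -(zvalP (y i) d) -(zvalP (x i) d) h.
Qed.

Definition vs n (v : 'I_n -> nat) : seq 'I_n :=
  flatten [seq nseq (v i) i | i <- enum 'I_n].

Lemma count_vs n (v : 'I_n -> nat) j : count_mem j (vs v) = v j.
Proof.
rewrite /vs count_flatten -map_comp.
rewrite (_ : sumn _ = \sum_(i <- enum 'I_n) (i == j) * v i)%N; last first.
  elim: (enum 'I_n) => [|a r IH] /=; first by rewrite big_nil.
  by rewrite big_cons IH count_nseq /= eq_sym.
rewrite big_enum /= (bigD1 j) //= eqxx mul1n big1 ?addn0 // => i ne.
by rewrite (negPf ne).
Qed.

Lemma rank_unitl (E : fieldType) p q (L : 'M[E]_p) (M : 'M[E]_(p, q)) :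
  L \in unitmx -> \rank (L *m M) = \rank M.
Proof.
move=> Lu; apply/eqP; rewrite eqn_leq mxrankM_maxr /=.
by rewrite -{1}(mulKmx Lu M) mxrankM_maxr.
Qed.

Lemma natb0 (E : fieldType) (b : bool) : ~~ b -> (b%:R : E) = 0.
Proof. by case: b. Qed.

Lemma LA1 (E : fieldType) N (Z Y : 'M[E]_N) :
  (forall U, \rank (Z + U *m Y)%R <= \rank Z)%N -> (Y <= Z)%MS.
Proof.
move=> h; set r := \rank Z.
have [rN | rlt] := ltnP r N; last first.
  by apply: submx_full; rewrite /row_full eqn_leq rank_leq_col.
apply/row_subP => k; apply/negPn/negP => nk.
set L := col_ebase Z; set Rb := row_ebase Z.
have Lu : L \in unitmx := col_ebase_unit Z.
have eZ : Z = L *m (pid_mx r *m Rb) by rewrite mulmxA mulmx_ebase.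
pose i0 := Ordinal rN.
pose M := pid_mx r *m Rb + delta_mx i0 k *m Y.
have eM : Z + (L *m delta_mx i0 k) *m Y = L *m M.
  by rewrite {1}eZ /M mulmxDr !mulmxA.
have hrM : (\rank M <= r)%N by have := h (L *m delta_mx i0 k); rewrite eM rank_unitl.
have hrP : \rank ((pid_mx r : 'M[E]_N) *m Rb) = r by rewrite -(rank_unitl _ Lu) -eZ.
have pd : (pid_mx r : 'M[E]_N) *m delta_mx i0 k = 0.
  apply/matrixP => a b; rewrite !mxE big1 // => c _; rewrite !mxE.
  rewrite -natrM mulnb; apply: natb0; apply/negP.
  by move=> /andP[/andP[/eqP ac ar] /andP[/eqP ci _]]; rewrite ac ci ltnn in ar.
have dp : (delta_mx 0 i0 : 'rV[E]_N) *m (pid_mx r : 'M[E]_N) = 0.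
  apply/matrixP => a b; rewrite !mxE big1 // => c _; rewrite !mxE.
  rewrite -natrM mulnb; apply: natb0; apply/negP.
  by move=> /andP[/andP[_ /eqP ci] /andP[_ cr]]; rewrite ci ltnn in cr.
have s1 : ((pid_mx r : 'M[E]_N) *m Rb <= M)%MS.
  apply/submxP; exists (pid_mx r).
  by rewrite /M mulmxDr !mulmxA pid_mx_id ?(ltnW rN) // pd mul0mx addr0.
have s2 : (row k Y <= M)%MS.
  apply/submxP; exists (delta_mx 0 i0).
  by rewrite /M mulmxDr !mulmxA dp mul0mx add0r mul_delta_mx rowE.
have s3 : (M <= (pid_mx r : 'M[E]_N) *m Rb)%MS.
  have h1 := mxrankS s1; rewrite hrP in h1.
  by rewrite -(mxrank_leqif_sup s1).2 eqn_leq hrP h1 hrM.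
have s4 : ((pid_mx r : 'M[E]_N) *m Rb <= Z)%MS.
  by apply/submxP; exists (invmx L); rewrite eZ mulKmx.
by move/negP: nk; apply; apply: submx_trans s2 (submx_trans s3 s4).
Qed.

Lemma LA1c (E : fieldType) N (Z Y : 'M[E]_N) :
  (forall U, \rank (Z + Y *m U)%R <= \rank Z)%N -> exists D, Y = Z *m D.
Proof.
move=> h.
have : (Y^T <= Z^T)%MS.
  apply: LA1 => U; have := h U^T; rewrite -mxrank_tr linearD /= trmx_mul trmxK.
  by rewrite mxrank_tr.
case/submxP => D e; exists D^T; by rewrite -[Y]trmxK e trmx_mul trmxK.
Qed.

Lemma MINOR (E : fieldType) p q (Z : 'M[E]_(p, q)) :
  exists (f : 'I_(\rank Z) -> 'I_p) (g : 'I_(\rank Z) -> 'I_q),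
    \det (mxsub f g Z) != 0.
Proof.
pose f := maxrankfun Z; pose B := rowsub f Z.
have Bf : row_free B := maxrowsub_free Z.
have eqr : \rank B^T = \rank Z by rewrite mxrank_tr; apply/eqP.
have : exists g : 'I_(\rank B^T) -> 'I_q, row_free (rowsub g B^T).
  by exists (maxrankfun B^T); apply: maxrowsub_free.
rewrite eqr => -[g gf]; exists f, g.
have -> : mxsub f g Z = (rowsub g B^T)^T by apply/matrixP => i j; rewrite !mxE.
by rewrite det_tr -unitfE -unitmxE -row_free_unit.
Qed.

Lemma rowsub_sub (E : fieldType) p q s (Z : 'M[E]_(p, q)) (f : 'I_s -> 'I_p) :
  (rowsub f Z <= Z)%MS.
Proof. by rewrite rowsubE submxMl. Qed.

Lemma colsub_rank (E : fieldType) p q s (Z : 'M[E]_(p, q)) (g : 'I_s -> 'I_q) :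
  (\rank (colsub g Z) <= \rank Z)%N.
Proof.
have -> : colsub g Z = Z *m colsub g 1%:M by rewrite mulmx_colsub mulmx1.
exact: mxrankM_maxl.
Qed.

Lemma MINOR2 (E : fieldType) p q s (Z : 'M[E]_(p, q)) (f : 'I_s -> 'I_p) (g : 'I_s -> 'I_q) :
  \det (mxsub f g Z) != 0 -> (s <= \rank Z)%N.
Proof.
move=> d; have u : mxsub f g Z \in unitmx by rewrite unitmxE unitfE.
rewrite -(mxrank_unit u) mxsubcr; apply: leq_trans (colsub_rank _ _) _.
exact: mxrankS (rowsub_sub _ _).
Qed.

Lemma PSEUDO (E : fieldType) p q s (Z : 'M[E]_(p, q)) (f : 'I_s -> 'I_p) (g : 'I_s -> 'I_q) :
  mxsub f g Z \in unitmx -> \rank Z = s ->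
  colsub g Z *m invmx (mxsub f g Z) *m rowsub f Z = Z.
Proof.
move=> u rZ; set B := rowsub f Z; set A := mxsub f g Z.
have sB : (B <= Z)%MS by apply: rowsub_sub.
have rB : \rank B = \rank Z.
  apply/eqP; rewrite eqn_leq mxrankS //= rZ -{1}(mxrank_unit u) /A mxsubcr.
  exact: colsub_rank.
have : (Z <= B)%MS by rewrite -(mxrank_leqif_sup sB).2 rB.
case/submxP => T eT.
have eA : colsub g Z = T *m A.
  by rewrite {1}eT -mulmx_colsub /A; congr (_ *m _); apply/matrixP => i j; rewrite !mxE.
by rewrite eA -!mulmxA mulKVmx // -eT.
Qed.

Definition Kmx (E : fieldType) (G : Type) n m (rho : G -> Zhatn n -> 'M[E]_m)
  (g : G) (x : Zhatn n) : 'M[E]_(m * m) :=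
  @lin_mulmxr E m m m (rho g (@z0 n)) - lin_mulmx (p := m) (rho g x).

Lemma KE (E : fieldType) (G : Type) n m (rho : G -> Zhatn n -> 'M[E]_m) g x (A : 'M[E]_m) :
  mxvec A *m Kmx rho g x = mxvec (A *m rho g (@z0 n) - rho g x *m A).
Proof. by rewrite /Kmx mulmxBr !mul_vec_lin /= linearB. Qed.

Definition Zmx (E : fieldType) (G : Type) n m (rho : G -> Zhatn n -> 'M[E]_m)
  (L : seq (G * 'M[E]_(m * m))) (x : Zhatn n) : 'M[E]_(m * m) :=
  \sum_(p <- L) Kmx rho p.1 x *m p.2.

Lemma mx_eq_vec (E : fieldType) m k (K1 K2 : 'M[E]_(m * m, k)) :
  (forall A : 'M[E]_m, mxvec A *m K1 = mxvec A *m K2) -> K1 = K2.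
Proof.
move=> h; apply/row_matrixP => i; rewrite !rowE.
by have := h (vec_mx (delta_mx 0 i)); rewrite vec_mxK.
Qed.

Lemma lin_mulmxE (E : fieldType) m (P A : 'M[E]_m) :
  mxvec A *m lin_mulmx (p := m) P = mxvec (P *m A).
Proof. by rewrite mul_vec_lin. Qed.

Lemma Kmx_conj (E : fieldType) (G : Type) n m (rho : G -> Zhatn n -> 'M[E]_m)
  (P : 'M[E]_m) x y :
  P \in unitmx -> (forall g, P *m rho g x = rho g y *m P) ->
  forall g, Kmx rho g y = lin_mulmx (p := m) (invmx P) *m Kmx rho g x *m lin_mulmx (p := m) P.
Proof.
move=> Pu hP g; apply: mx_eq_vec => A.
rewrite !mulmxA (lin_mulmxE (invmx P) A) !KE (lin_mulmxE P); congr mxvec.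
rewrite mulmxBr !mulmxA mulmxV // mul1mx; congr (_ - _).
by rewrite hP -!mulmxA mulKVmx.
Qed.

Lemma lin_mulmx_unit (E : fieldType) m (P : 'M[E]_m) :
  P \in unitmx -> lin_mulmx (p := m) P \in unitmx.
Proof.
move=> Pu; have : lin_mulmx (p := m) P *m lin_mulmx (p := m) (invmx P) = 1%:M.
  by apply: mx_eq_vec => A; rewrite mulmxA !lin_mulmxE mulmxA mulVmx // mul1mx mulmx1.
by case/mulmx1_unit.
Qed.

Lemma Zmx_conj (E : fieldType) (G : Type) n m (rho : G -> Zhatn n -> 'M[E]_m)
  (P : 'M[E]_m) x y L :
  P \in unitmx -> (forall g, P *m rho g x = rho g y *m P) ->
  \rank (Zmx rho L y) = \rank (Zmx rho [seq (p.1, lin_mulmx (p := m) P *m p.2) | p <- L] x).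
Proof.
move=> Pu hP.
have -> : Zmx rho L y = lin_mulmx (p := m) (invmx P) *m
    Zmx rho [seq (p.1, lin_mulmx (p := m) P *m p.2) | p <- L] x.
  rewrite /Zmx big_map mulmx_sumr; apply: eq_bigr => p _ /=.
  by rewrite (Kmx_conj Pu hP) !mulmxA.
by rewrite rank_unitl // lin_mulmx_unit // unitmx_inv.
Qed.

Lemma Zmx_ker (E : fieldType) (G : Type) n m (rho : G -> Zhatn n -> 'M[E]_m)
  (v : 'rV[E]_(m * m)) x L :
  (forall g, v *m Kmx rho g x = 0) -> v *m Zmx rho L x = 0.
Proof.
move=> h; rewrite /Zmx mulmx_sumr big1 // => p _.
by rewrite mulmxA h mul0mx.
Qed.

Lemma Zmx_cons (E : fieldType) (G : Type) n m (rho : G -> Zhatn n -> 'M[E]_m)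
  x L g U : Zmx rho ((g, U) :: L) x = Zmx rho L x + Kmx rho g x *m U.
Proof. by rewrite /Zmx big_cons addrC. Qed.

Fixpoint Pp (E : fieldType) n m (P : 'I_n -> Zhatn n -> 'M[E]_m) (s : seq 'I_n)
  (y : Zhatn n) : 'M[E]_m :=
  match s with [::] => 1%:M | i :: s' => Pp P s' (ztrans i y) *m P i y end.

Lemma Pp_int (E : fieldType) (G : Type) n m (rho : G -> Zhatn n -> 'M[E]_m)
  (P : 'I_n -> Zhatn n -> 'M[E]_m) :
  (forall i g x, P i x *m rho g x = rho g (ztrans i x) *m P i x) ->
  forall s g y, Pp P s y *m rho g y = rho g (trs s y) *m Pp P s y.
Proof.
move=> hP; elim=> [|i s IH] g y /=; first by rewrite mul1mx mulmx1.
by rewrite -mulmxA hP mulmxA IH mulmxA.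
Qed.

Lemma Pp_unit (E : fieldType) n m (P : 'I_n -> Zhatn n -> 'M[E]_m) :
  (forall i x, P i x \in unitmx) -> forall s y, Pp P s y \in unitmx.
Proof.
move=> hP; elim=> [|i s IH] y /=; first exact: unitmx1.
by rewrite unitmx_mul IH hP.
Qed.

Lemma mcts_trs (R : realType) (E : fieldType) (nrm : E -> R) n p q (s : seq 'I_n)
  (M : Zhatn n -> 'M[E]_(p, q)) x :
  mctsAt nrm M (trs s x) -> mctsAt nrm (fun y => M (trs s y)) x.
Proof. by move=> c i j; apply: (cts_trs (f := fun y => M y i j)); apply: c. Qed.

Lemma Pp_cts (R : realType) (E : fieldType) (nrm : E -> R) (hN : nax nrm) n m
  (P : 'I_n -> Zhatn n -> 'M[E]_m) :
  (forall i x, mctsAt nrm (P i) x) -> forall s y, mctsAt nrm (Pp P s) y.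
Proof.
move=> hP; elim=> [|i s IH] y /=; first exact: mcts_const.
apply: (mcts_local (N := 0%N) (M' := fun z => Pp P s (ztrans i z) *m P i z)) => //.
apply: mcts_mul => //; try exact: hP.
exact: (mcts_trs (s := [:: i]) (M := Pp P s)).
Qed.


Unset Implicit Arguments.
Unset Strict Implicit.

Theorem lemma2p4 (l : nat) (hl : prime l) (R : realType) (E : fieldType)
  (nrm : E -> R) (hE : ell_adic_field nrm l) (n m : nat)
  (G : topologicalType) (mul : G -> G -> G) (inv : G -> G) (one : G)
  (hG : profinite_group mul inv one)
  (rho : G -> Zhatn n -> 'M[E]_m)
  (rho_GL : forall g, GLCts nrm (rho g))
  (rho_hom : forall g h x, rho (mul g h) x = rho g x *m rho h x)
  (rho_cts : cts_rep nrm rho)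
  (htrans : forall i : 'I_n, exists P : Zhatn n -> 'M[E]_m,
     GLCts nrm P /\ forall g x, P x *m rho g x = rho g (ztrans i x) *m P x) :
  (forall x y : Zhatn n, exists A : 'M[E]_m, A \in unitmx /\
     forall g, A *m rho g x = rho g y *m A) /\
  (exists h : Zhatn n -> 'M[E]_m, GLCts nrm h /\
     forall g, exists c : 'M[E]_m, c \in unitmx /\
       forall x, rho g x = invmx (h x) *m c *m h x).
Proof.
have hN := nax_of hl hE.
set z := @z0 n.
have [P hP] := choice htrans.
have Pcts : forall i x, mctsAt nrm (P i) x.
  by move=> i x a b; case: (hP i) => [[c _] _]; apply: c.
have Punit : forall i x, P i x \in unitmx.
  move=> i x; case: (hP i) => [[_ [Q [_ hQ]]] _].
  by case: (mulmx1_unit (hQ x).1).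
have Pint : forall i g x, P i x *m rho g x = rho g (ztrans i x) *m P i x.
  by move=> i; case: (hP i).
have rcts : forall g x, mctsAt nrm (rho g) x.
  by move=> g x a b; case: (rho_GL g) => c _; apply: c.
have runit : forall g x, rho g x \in unitmx.
  move=> g x; case: (rho_GL g) => [_ [Q [_ hQ]]].
  by case: (mulmx1_unit (hQ x).1).
have Kcts : forall g x, mctsAt nrm (Kmx rho g) x.
  move=> g x; apply: mcts_add => //; first exact: mcts_const.
  by apply: mcts_opp => //; apply: mcts_lin_mulmx => //; apply: rcts.
have Zcts : forall L x, mctsAt nrm (Zmx rho L) x.
  move=> L x; apply: mcts_sum => // p; apply: mcts_mul => //; exact: mcts_const.
(* Step 1: a global maximiser of the rank *)
have [x1 [L1 hmax]] : exists x1 L1, forall x L,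
    (\rank (Zmx rho L x) <= \rank (Zmx rho L1 x1))%N.
  pose Pr k := `[< exists x L, \rank (Zmx rho L x) = k >].
  have ex : exists k, Pr k by exists 0%N; apply/asboolP; exists z, [::]; rewrite /Zmx big_nil mxrank0.
  have bd : forall k, Pr k -> (k <= m * m)%N.
    by move=> k /asboolP [x [L <-]]; apply: rank_leq_row.
  case: (ex_maxnP ex bd) => k /asboolP [x [L ek]] hk.
  exists x, L => x' L'; rewrite ek; apply: hk; apply/asboolP; by exists x', L'.
(* Step 2: lower semicontinuity near x1 *)
have [N1 hN1] : exists N1, forall y, zclose N1 x1 y ->
    (\rank (Zmx rho L1 x1) <= \rank (Zmx rho L1 y))%N.
  have [f [g hfg]] := MINOR (Zmx rho L1 x1).
  have cd : ctsAt nrm (fun y => \det (mxsub f g (Zmx rho L1 y))) x1.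
    by apply: mcts_det => //; apply: mcts_sub; apply: Zcts.
  have [N hN'] := cts_nonzero_near hN cd hfg.
  by exists N => y /hN' d; apply: MINOR2 d.
(* Step 3: transport to the base point *)
set M1 := (N1.+1)`!.
set s1 := vs (fun i => zval (x1 i) M1.-1).
have cl1 : zclose N1 x1 (trs s1 z).
  apply: zclose_cyl => i; rewrite zval_trs count_vs /= add0n modn_small //.
  exact: zval_lt.
have [L0 hL0] : exists L0, forall x L, (\rank (Zmx rho L x) <= \rank (Zmx rho L0 z))%N.
  exists [seq (p.1, lin_mulmx (p := m) (Pp P s1 z) *m p.2) | p <- L1] => x L.
  rewrite -(Zmx_conj (y := trs s1 z)) ?Pp_unit //; last by move=> g; apply: Pp_int.
  exact: leq_trans (hmax x L) (hN1 _ cl1).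
(* Step 4: local section near z *)
set r0 := \rank (Zmx rho L0 z).
have [f0 [g0 hfg0]] := MINOR (Zmx rho L0 z).
pose Am y := mxsub f0 g0 (Zmx rho L0 y).
have Acts : forall y, mctsAt nrm Am y by move=> y; apply: mcts_sub; apply: Zcts.
have [N2 hN2] : exists N2, forall y, zclose N2 z y -> \det (Am y) != 0.
  by apply: (cts_nonzero_near hN) => //; apply: mcts_det.
pose Sx y := colsub g0 1%:M *m invmx (Am y) *m rowsub f0 (1%:M : 'M[E]_(m * m)).
pose v0 := mxvec (1%:M : 'M[E]_m).
pose v y := v0 - v0 *m Zmx rho L0 y *m Sx y.
pose Q0 y := vec_mx (v y).
have v0K : forall g, v0 *m Kmx rho g z = 0.
  by move=> g; rewrite KE mul1mx mulmx1 subrr linear0.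
have Q0z : Q0 z = 1%:M.
  by rewrite /Q0 /v (Zmx_ker _ v0K) !mul0mx subr0 mxvecK.
have Wv : forall y, zclose N2 z y -> forall g, v y *m Kmx rho g y = 0.
  move=> y cy g.
  have uA : Am y \in unitmx by rewrite unitmxE unitfE hN2.
  have rZ : \rank (Zmx rho L0 y) = r0.
    apply/eqP; rewrite eqn_leq hL0 /=; exact: MINOR2 (hN2 _ cy).
  have ZSZ : Zmx rho L0 y *m Sx y *m Zmx rho L0 y = Zmx rho L0 y.
    rewrite /Sx !mulmxA mulmx_colsub mulmx1 -!mulmxA mul_rowsub_mx mul1mx mulmxA.
    exact: PSEUDO.
  have vZ : v y *m Zmx rho L0 y = 0.
    by rewrite /v mulmxBl -[X in _ - X]mulmxA -[X in _ - X]mulmxA [X in _ - _ *m X]mulmxA ZSZ subrr.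
  have [D eD] : exists D, Kmx rho g y = Zmx rho L0 y *m D.
    apply: LA1c => U; rewrite -Zmx_cons rZ; exact: hL0.
  by rewrite eD mulmxA vZ mul0mx.
have Q0cts : forall y, zclose N2 z y -> mctsAt nrm Q0 y.
  move=> y cy.
  have c1 : mctsAt nrm (fun _ : Zhatn n => v0) y by apply: mcts_const.
  have c2 : mctsAt nrm (fun w => v0 *m Zmx rho L0 w) y by apply: mcts_mul.
  have c3 : mctsAt nrm (fun w => invmx (Am w)) y.
    by apply: mcts_inv => //; rewrite unitmxE unitfE hN2.
  have c4 : mctsAt nrm Sx y.
    apply: mcts_mul => //; last exact: mcts_const.
    by apply: mcts_mul => //; exact: mcts_const.
  apply: mcts_vec_mx; apply: mcts_add => //; apply: mcts_opp => //.
  exact: mcts_mul.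
have Q0int : forall y, zclose N2 z y -> forall g, Q0 y *m rho g z = rho g y *m Q0 y.
  move=> y cy g; apply/eqP; rewrite -subr_eq0; apply/eqP.
  apply: (can_inj mxvecK); rewrite linear0 -KE /Q0 vec_mxK.
  exact: Wv.
have [N3 hN3] : exists N3, forall y, zclose N3 z y -> \det (Q0 y) != 0.
  apply: (cts_nonzero_near hN); first by apply: mcts_det => //; apply: Q0cts.
  by rewrite Q0z det1 oner_neq0.
(* Step 5: the global section *)
set N4 := maxn N2 N3.
set M := (N4.+1)`!.
have M0 : (0 < M)%N by apply: fact_gt0.
pose sv (y : Zhatn n) := vs (fun i => M - zval (y i) M.-1)%N.
pose t y := trs (sv y) y.
have clt : forall y, zclose N4 z (t y).
  move=> y; apply: zclose_cyl => i; rewrite zval_trs count_vs /=.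
  rewrite subnKC ?prednK // ?modnn //.
  by have := zval_lt (y i) M.-1; rewrite prednK // => /ltnW.
have cl2 : forall y, zclose N2 z (t y) by move=> y; apply: zclose_mono (clt y); rewrite leq_maxl.
have cl3 : forall y, zclose N3 z (t y) by move=> y; apply: zclose_mono (clt y); rewrite leq_maxr.
pose Q y := invmx (Pp P (sv y) y) *m Q0 (t y).
have Qunit : forall y, Q y \in unitmx.
  move=> y; rewrite unitmx_mul unitmx_inv Pp_unit //.
  by rewrite unitmxE unitfE hN3.
have Qint : forall y g, Q y *m rho g z = rho g y *m Q y.
  move=> y g; rewrite /Q -mulmxA Q0int //.
  have hp := Pp_int Pint (sv y) g y.
  have u := Pp_unit Punit (sv y) y.
  rewrite !mulmxA; congr (_ *m _).
  apply: (can_inj (mulKmx u)); rewrite mulKVmx // mulmxA hp -mulmxA mulmxV // mulmx1.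
  by [].
have Qcts : forall y, mctsAt nrm Q y.
  move=> y.
  apply: (mcts_local (N := M.-1) (M' := fun w => invmx (Pp P (sv y) w) *m Q0 (trs (sv y) w))).
    move=> w cw; rewrite /Q /t; suff -> : sv w = sv y by [].
    rewrite /sv /vs; congr flatten; apply: eq_map => i; congr nseq.
    by rewrite (cw i M.-1).
  apply: mcts_mul => //.
    by apply: mcts_inv => //; [exact: Pp_cts | exact: Pp_unit].
  by apply: (mcts_trs (M := Q0)); exact: (Q0cts _ (cl2 y)).
clearbody Q.
have hconj : forall x g, rho g x = Q x *m rho g z *m invmx (Q x).
  by move=> x g; rewrite (Qint x g) -mulmxA (mulmxV (Qunit x)) mulmx1.
split.
  move=> x y; exists (Q y *m invmx (Q x)); split.
    by rewrite unitmx_mul unitmx_inv !Qunit.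
  move=> g; rewrite (hconj x g) !mulmxA (mulmxKV (Qunit x)) (Qint y g).
  by [].
exists (fun y => invmx (Q y)); split.
  split; first by move=> a b x; apply: (mcts_inv hN (Qcts x) (Qunit x)).
  exists Q; split; first by move=> a b x; apply: Qcts.
  by move=> x; rewrite (mulVmx (Qunit x)) (mulmxV (Qunit x)).
move=> g; exists (rho g z); split; first exact: runit.
by move=> x; rewrite invmxK; apply: hconj.
Qed.
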